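(* Let $\nu$ be a successor function on $\{1,\dots,n\}$ with $l$ cycles. There is a (noncanonical) $\mathbb{F}$-algebra isomorphism $\Omega_\nu\cong\Omega_1^{\otimes(n-l)}\otimes\Theta^{\otimes l}$.
   Context: $\mathbb{F}=\mathbb{F}_2$. A successor function is a permutation $\nu$ of $\{1,\dots,n\}$. $\Omega_\nu$ is the $\mathbb{F}$-algebra generated by $z_1,\dots,z_n,w_1,\dots,w_n$ modulo $[z_i,z_j]=0$, $[w_i,w_j]=0$, $z_i^2=w_i^2=0$, $[z_i,w_j]=\delta_{\nu(i),j}-\delta_{i,j}$, where $[x,y]=xy+yx$. $\Theta=\Lambda(\mathbb{F}^2)$ is the exterior algebra on two generators $w,z$ (the Clifford algebra of the zero quadratic form on $\mathbb{F}^2$), and $\Omega_1$ is the algebra generated by $w,z$ modulo $w^2=z^2=0$, $wz+zw=1$ (the Clifford algebra of $Q_1(x,y)=xy$). *)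

(* Defs.v *)
From HB Require Import structures.
From mathcomp Require Import all_boot all_order all_algebra all_fingroup.
Set Implicit Arguments. Unset Strict Implicit. Unset Printing Implicit Defensive.
Import GRing.Theory.
Local Open Scope ring_scope.

Notation F2 := 'F_2.

Definition acomm (R : pzRingType) (x y : R) : R := x * y + y * x.

Definition alg_hom (A B : algType F2) (f : A -> B) : Prop :=
  [/\ forall x y, f (x + y) = f x + f y,
      forall x y, f (x * y) = f x * f y,
      f 1 = 1 &
      forall (a : F2) x, f (a *: x) = a *: f x].

Definition alg_iso (A B : algType F2) (f : A -> B) : Prop :=
  alg_hom f /\ bijective f.

(* (A, g) is the F-algebra presented by generators indexed by I subject to
   the relations [rel] : universal property of a presentation. *)
Definition presents (I : Type) (rel : forall B : algType F2, (I -> B) -> Prop)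
    (A : algType F2) (g : I -> A) : Prop :=
  rel A g /\
  forall (B : algType F2) (h : I -> B), rel B h ->
    (exists f : A -> B, alg_hom f /\ forall i, f (g i) = h i) /\
    (forall f1 f2 : A -> B, alg_hom f1 -> alg_hom f2 ->
       (forall i, f1 (g i) = h i) -> (forall i, f2 (g i) = h i) ->
       forall x, f1 x = f2 x).

(* Relations of Omega_nu; generator inl i is z_i, inr i is w_i. *)
Definition Omega_rel (n : nat) (nu : {perm 'I_n}) (B : algType F2)
    (g : 'I_n + 'I_n -> B) : Prop :=
  [/\ forall i j, acomm (g (inl i)) (g (inl j)) = 0,
      forall i j, acomm (g (inr i)) (g (inr j)) = 0,
      forall i, g (inl i) * g (inl i) = 0,
      forall i, g (inr i) * g (inr i) = 0 &
      forall i j, acomm (g (inl i)) (g (inr j)) = (nu i == j)%:R - (i == j)%:R].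

(* Clifford algebra on F^2 with generators w (= true), z (= false):
   w^2 = z^2 = 0, wz + zw = c.  c = 1 : Omega_1 (form Q_1(x,y)=xy);
   c = 0 : Theta = Lambda(F^2). *)
Definition Cliff2_rel (c : F2) (B : algType F2) (g : bool -> B) : Prop :=
  [/\ g true * g true = 0, g false * g false = 0 & acomm (g true) (g false) = c%:A].

(* (T, iota) is the tensor product over F of the finite family of algebras
   (A k)_{k < m}, via its universal property. *)
Definition is_tensor_family (m : nat) (A : 'I_m -> algType F2) (T : algType F2)
    (iota : forall k, A k -> T) : Prop :=
  [/\ forall k, alg_hom (iota k),
      forall k k' (x : A k) (y : A k'), k != k' ->
        iota k x * iota k' y = iota k' y * iota k x &
      forall (C : algType F2) (f : forall k, A k -> C),
        (forall k, alg_hom (f k)) ->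
        (forall k k' (x : A k) (y : A k'), k != k' -> f k x * f k' y = f k' y * f k x) ->
        (exists h : T -> C, alg_hom h /\ forall k x, h (iota k x) = f k x) /\
        (forall h1 h2 : T -> C, alg_hom h1 -> alg_hom h2 ->
           (forall k x, h1 (iota k x) = f k x) -> (forall k x, h2 (iota k x) = f k x) ->
           forall t, h1 t = h2 t)].

(* number of cycles of a permutation (fixed points count as cycles) *)
Definition ncycles (n : nat) (nu : {perm 'I_n}) : nat := #|porbits nu|.

(* Main.v *)
Require Import Defs.
From HB Require Import structures.
From mathcomp Require Import all_boot all_order all_algebra all_fingroup.
From mathcomp Require Import zify.
Import GRing.Theory.
Local Open Scope ring_scope.
Set Implicit Arguments. Unset Strict Implicit.

Lemma F2_11 : (1 + 1 : F2) = 0. Proof. by apply/eqP. Qed.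

Section Gen.
Variable A : algType F2.
Implicit Types x y : A.

Lemma addxx x : x + x = 0.
Proof. by rewrite -[x]scale1r -scalerDl F2_11 scale0r. Qed.

Lemma opp_id x : - x = x.
Proof. by apply/eqP; rewrite eq_sym -addr_eq0 addxx. Qed.

Lemma acommC x y : acomm x y = acomm y x.
Proof. by rewrite /acomm addrC. Qed.

Lemma acommxx x : acomm x x = 0.
Proof. exact: addxx. Qed.

Lemma acomm0_comm x y : acomm x y = 0 -> x * y = y * x.
Proof. by move/eqP; rewrite /acomm addr_eq0 opp_id => /eqP. Qed.

Lemma comm_acomm0 x y : x * y = y * x -> acomm x y = 0.
Proof. by rewrite /acomm => ->; exact: addxx. Qed.

Lemma acommDl x y z : acomm (x + y) z = acomm x z + acomm y z.
Proof. by rewrite /acomm mulrDl mulrDr addrACA. Qed.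

Lemma acommDr x y z : acomm z (x + y) = acomm z x + acomm z y.
Proof. by rewrite acommC acommDl !(acommC z). Qed.

Lemma acommZl a x y : acomm (a *: x) y = a *: acomm x y.
Proof. by rewrite /acomm -scalerAl -scalerAr scalerDr. Qed.

Lemma acommZr a x y : acomm x (a *: y) = a *: acomm x y.
Proof. by rewrite acommC acommZl acommC. Qed.

Lemma acomm0l y : acomm 0 y = 0.
Proof. by rewrite /acomm mul0r mulr0 addr0. Qed.

Lemma acomm0r y : acomm y 0 = 0.
Proof. by rewrite acommC acomm0l. Qed.

Lemma acomm_suml (I : Type) (s : seq I) (F : I -> A) y :
  acomm (\sum_(i <- s) F i) y = \sum_(i <- s) acomm (F i) y.
Proof.
elim: s => [|a s IH]; first by rewrite !big_nil acomm0l.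
by rewrite !big_cons acommDl IH.
Qed.

Lemma acomm_sumr (I : Type) (s : seq I) (F : I -> A) y :
  acomm y (\sum_(i <- s) F i) = \sum_(i <- s) acomm y (F i).
Proof. by rewrite acommC acomm_suml; apply: eq_bigr => i _; rewrite acommC. Qed.

Lemma acomm_sums n (a b : 'I_n -> F2) (x y : 'I_n -> A) (N : 'I_n -> 'I_n -> F2) :
  (forall i j, acomm (x i) (y j) = (N i j)%:A) ->
  acomm (\sum_i a i *: x i) (\sum_j b j *: y j) =
  (\sum_i \sum_j a i * b j * N i j)%:A.
Proof.
move=> H; rewrite acomm_suml scaler_suml; apply: eq_bigr => i _.
rewrite acomm_sumr scaler_suml; apply: eq_bigr => j _.
by rewrite acommZl acommZr H !scalerA; congr (_ *: _); rewrite mulrC mulrA.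
Qed.

Lemma sq_sum n (a : 'I_n -> F2) (x : 'I_n -> A) :
  (forall i, x i * x i = 0) -> (forall i j, acomm (x i) (x j) = 0) ->
  (\sum_i a i *: x i) * (\sum_i a i *: x i) = 0.
Proof.
move=> H1 H2.
have : forall s : seq 'I_n, (\sum_(i <- s) a i *: x i) * (\sum_(i <- s) a i *: x i) = 0.
  elim=> [|i s IH]; first by rewrite big_nil mul0r.
  rewrite big_cons mulrDl !mulrDr IH addr0 -scalerAl -scalerAr H1 !scaler0 add0r.
  have := acomm_sumr s (fun j => a j *: x j) (a i *: x i).
  rewrite /acomm => ->; apply: big1 => j _.
  by rewrite -/(acomm _ _) acommZl acommZr H2 !scaler0.
by move/(_ (index_enum _)).
Qed.
End Gen.

Section Hom.
Variables A B C : algType F2.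

Lemma hom0 (f : A -> B) : alg_hom f -> f 0 = 0.
Proof. by case=> fD _ _ _; apply: (addrI (f 0)); rewrite -fD !addr0. Qed.

Lemma hom_sum (f : A -> B) (I : Type) (s : seq I) (F : I -> A) : alg_hom f ->
  f (\sum_(i <- s) F i) = \sum_(i <- s) f (F i).
Proof.
move=> hf; elim: s => [|i s IH]; first by rewrite !big_nil hom0.
by rewrite !big_cons; case: hf => -> _ _ _; rewrite IH.
Qed.

Lemma hom_sumZ (f : A -> B) n (a : 'I_n -> F2) (x : 'I_n -> A) : alg_hom f ->
  f (\sum_i a i *: x i) = \sum_i a i *: f (x i).
Proof.
move=> hf; rewrite hom_sum //; apply: eq_bigr => i _.
by case: hf => _ _ _ ->.
Qed.

Lemma hom_acomm (f : A -> B) x y : alg_hom f -> f (acomm x y) = acomm (f x) (f y).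
Proof. by case=> fD fM _ _; rewrite /acomm fD !fM. Qed.

Lemma hom_alg (f : A -> B) (a : F2) : alg_hom f -> f (a%:A) = a%:A.
Proof. by case=> _ _ f1 fZ; rewrite fZ f1. Qed.

Lemma hom_comp (f : A -> B) (h : B -> C) : alg_hom f -> alg_hom h -> alg_hom (h \o f).
Proof.
case=> fD fM f1 fZ [hD hM h1 hZ]; split => /=.
- by move=> x y; rewrite fD hD.
- by move=> x y; rewrite fM hM.
- by rewrite f1 h1.
- by move=> a x; rewrite fZ hZ.
Qed.

Lemma hom_id : alg_hom (@id A).
Proof. by []. Qed.
End Hom.

Lemma cliff_hom (c : F2) (A B : algType F2) (gen : bool -> A) (f : A -> B) :
  alg_hom f -> Cliff2_rel c gen -> Cliff2_rel c (f \o gen).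
Proof.
move=> hf [h1 h2 h3]; split => /=.
- by case: (hf) => _ <- _ _; rewrite h1 hom0.
- by case: (hf) => _ <- _ _; rewrite h2 hom0.
- by rewrite -hom_acomm // h3 hom_alg.
Qed.

Section Centr.
Variables (C : algType F2) (u : C).
Definition centr : {pred C} := fun x => x * u == u * x.
Fact centr_closed : GRing.subsemialg_closed centr.
Proof.
split.
- by rewrite unfold_in /= mul1r mulr1.
- split; first by rewrite unfold_in /= mul0r mulr0.
  move=> x y; rewrite !unfold_in /= => /eqP hx /eqP hy.
  by rewrite mulrDl mulrDr hx hy.
- move=> a x; rewrite !unfold_in /= => /eqP hx.
  by rewrite -scalerAl hx scalerAr.
- move=> x y; rewrite !unfold_in /= => /eqP hx /eqP hy.
  by rewrite -mulrA hy mulrA hx mulrA.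
Qed.
Record cT := CT { cval :> C; cvalP : cval \in centr }.
HB.instance Definition _ := [isSub for cval].
HB.instance Definition _ := [Choice of cT by <:].
HB.instance Definition _ := GRing.SubChoice_isSubAlgebra.Build F2 C centr cT centr_closed.
End Centr.

Lemma centr_lemma (c : F2) (A C : algType F2) (gen : bool -> A)
  (HA : presents (Cliff2_rel c) gen) (f : A -> C) (hf : alg_hom f) (u : C)
  (hu : forall b, f (gen b) * u = u * f (gen b)) : forall x, f x * u = u * f x.
Proof.
have hu' : forall b, f (gen b) \in centr u by move=> b; rewrite unfold_in /=; apply/eqP; exact: hu.
pose h b : cT u := @CT C u _ (hu' b).
have hv : alg_hom (fun x : cT u => @cval C u x) by split.
have relC := @cliff_hom c A C gen f hf HA.1.
have relh : Cliff2_rel c h.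
  case: relC => /= h1 h2 h3; split; apply: val_inj => /=; [exact: h1 | exact: h2 | exact: h3].
have [[F [hF HF]] _] := HA.2 _ h relh.
have [_ uniq] := HA.2 _ _ relC.
move=> x.
have := uniq (fun x => @cval C u (F x)) f (@hom_comp A (cT u) C F _ hF hv) hf.
move=> /(_ (fun b => congr1 (@cval _ _) (HF b)) (fun b => erefl)) /(_ x) <-.
by have := @cvalP C u (F x); rewrite unfold_in /= => /eqP.
Qed.

From Stdlib Require Import IndefiniteDescription.

Lemma mx3E n (X N Y : 'M[F2]_n) a b :
  (X *m N *m Y) a b = \sum_i \sum_j X a i * Y j b * N i j.
Proof.
rewrite mxE; under eq_bigr => j _ do rewrite mxE big_distrl /=.
rewrite exchange_big; apply: eq_bigr => i _; apply: eq_bigr => j _.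
by rewrite mulrAC.
Qed.

Lemma change_basis (A : algType F2) n (a : 'I_n -> F2) (b : 'I_n -> 'I_n -> F2)
  (v : 'I_n -> A) :
  \sum_i a i *: \sum_k b i k *: v k = \sum_k (\sum_i a i * b i k) *: v k.
Proof.
under eq_bigr do rewrite scaler_sumr; rewrite exchange_big.
apply: eq_bigr => k _; rewrite scaler_suml; apply: eq_bigr => i _.
by rewrite scalerA.
Qed.

Lemma sum_delta (A : algType F2) n (v : 'I_n -> A) (a : 'I_n) (c : 'I_n -> F2) :
  (forall k, c k = (a == k)%:R) -> \sum_k c k *: v k = v a.
Proof.
move=> H; rewrite (bigD1 a) //= big1 ?addr0; first by rewrite H eqxx scale1r.
by move=> k hk; rewrite H eq_sym (negbTE hk) scale0r.
Qed.

Lemma mxinv_entry n (L : 'M[F2]_n) a b : L \in unitmx ->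
  (\sum_i (invmx L) a i * L i b = (a == b)%:R) /\
  (\sum_i L a i * (invmx L) i b = (a == b)%:R).
Proof.
move=> HL; split.
  by move: (mulVmx HL) => /matrixP /(_ a b); rewrite !mxE.
by move: (mulmxV HL) => /matrixP /(_ a b); rewrite !mxE.
Qed.

Lemma acomm_sums0 (A : algType F2) n (a b : 'I_n -> F2) (x y : 'I_n -> A) :
  (forall i j, acomm (x i) (y j) = 0) ->
  acomm (\sum_i a i *: x i) (\sum_j b j *: y j) = 0.
Proof.
move=> H; rewrite (@acomm_sums A n a b x y (fun _ _ => 0)).
  by rewrite big1 ?scale0r // => i _; rewrite big1 // => j _; rewrite mulr0.
by move=> i j; rewrite H scale0r.
Qed.

Definition OmM_rel n (M : 'M[F2]_n) (B : algType F2) (g : 'I_n + 'I_n -> B) : Prop :=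
  [/\ forall i j, acomm (g (inl i)) (g (inl j)) = 0,
      forall i j, acomm (g (inr i)) (g (inr j)) = 0,
      forall i, g (inl i) * g (inl i) = 0,
      forall i, g (inr i) * g (inr i) = 0 &
      forall i j, acomm (g (inl i)) (g (inr j)) = (M i j)%:A].

Lemma main_abstract n (M L U : 'M[F2]_n) (c : 'I_n -> F2)
  (HL : L \in unitmx) (HU : U \in unitmx)
  (HM : M = L *m (\matrix_(a, b) ((a == b)%:R * c a)) *m U)
  (Om : algType F2) (g : 'I_n + 'I_n -> Om) (Hom : presents (OmM_rel M) g)
  (A : 'I_n -> algType F2) (gen : forall k, bool -> A k)
  (HA : forall k, presents (Cliff2_rel (c k)) (gen k))
  (T : algType F2) (iota : forall k, A k -> T) (HT : is_tensor_family iota) :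
  exists f : Om -> T, alg_iso f.
Proof.
set D := \matrix_(a, b) _ in HM.
have DE : forall a b, D a b = (a == b)%:R * c a by move=> a b; rewrite mxE.
pose Li := invmx L; pose Ui := invmx U.
have HD : Li *m M *m Ui = D.
  by rewrite HM !mulmxA mulVmx // mul1mx -mulmxA mulmxV // mulmx1.
case: HT => Hi Hc HTu.
pose Z k := iota k (gen k false); pose W k := iota k (gen k true).
have iM : forall k x y, iota k (x * y) = iota k x * iota k y by move=> k; case: (Hi k).
have TZZ : forall k k', acomm (Z k) (Z k') = 0.
  move=> k k'; case: (eqVneq k k') => [<-|hk]; first exact: acommxx.
  by apply: comm_acomm0; apply: Hc.
have TWW : forall k k', acomm (W k) (W k') = 0.
  move=> k k'; case: (eqVneq k k') => [<-|hk]; first exact: acommxx.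
  by apply: comm_acomm0; apply: Hc.
have TZW : forall k k', acomm (Z k) (W k') = (D k k')%:A.
  move=> k k'; rewrite DE; case: (eqVneq k k') => [<-|hk].
    rewrite ?eqxx mul1r acommC /Z /W -hom_acomm //.
    by case: (HA k).1 => _ _ ->; rewrite hom_alg.
  by rewrite ?(negbTE hk) mul0r scale0r; apply: comm_acomm0; apply: Hc.
have TZ2 : forall k, Z k * Z k = 0.
  by move=> k; rewrite /Z -iM; case: (HA k).1 => _ -> _; rewrite hom0.
have TW2 : forall k, W k * W k = 0.
  by move=> k; rewrite /W -iM; case: (HA k).1 => -> _ _; rewrite hom0.
pose h (x : 'I_n + 'I_n) : T := match x with
  | inl i => \sum_k L i k *: Z k
  | inr j => \sum_k U k j *: W k end.
have relh : OmM_rel M h.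
  split => /=.
  - by move=> i j; apply: acomm_sums0.
  - by move=> i j; apply: acomm_sums0.
  - by move=> i; apply: sq_sum.
  - by move=> i; apply: sq_sum.
  - move=> i j; rewrite (@acomm_sums T n _ _ Z W D) //.
    by rewrite HM mx3E.
have [[Phi [hPhi HPhi]] _] := Hom.2 T h relh.
case: (Hom.1) => zz ww z2 w2 zw.
pose Z' k := \sum_i Li k i *: g (inl i).
pose W' k := \sum_j Ui j k *: g (inr j).
have OZW : forall a b, acomm (Z' a) (W' b) = (D a b)%:A.
  move=> a b; rewrite (@acomm_sums Om n _ _ _ _ M) //.
  by rewrite -HD mx3E.
have OZZ : forall a b, acomm (Z' a) (Z' b) = 0 by move=> a b; apply: acomm_sums0.
have OWW : forall a b, acomm (W' a) (W' b) = 0 by move=> a b; apply: acomm_sums0.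
pose hk k (b : bool) := if b then W' k else Z' k.
have relk : forall k, Cliff2_rel (c k) (hk k).
  move=> k; split => /=; first exact: sq_sum.
    exact: sq_sum.
  by rewrite acommC OZW DE eqxx mul1r.
have Hf : forall k, exists fk : A k -> Om, alg_hom fk /\ forall b, fk (gen k b) = hk k b.
  by move=> k; have [[fk Hfk] _] := (HA k).2 Om (hk k) (relk k); exists fk.
pose f k := proj1_sig (constructive_indefinite_description _ (Hf k)).
have hf : forall k, alg_hom (f k).
  by move=> k; case: (proj2_sig (constructive_indefinite_description _ (Hf k))).
have Hfg : forall k b, f k (gen k b) = hk k b.
  by move=> k; case: (proj2_sig (constructive_indefinite_description _ (Hf k))).
have gencomm : forall k k' b b', k != k' -> hk k b * hk k' b' = hk k' b' * hk k b.
  move=> k k' [] [] hkk /=; apply: acomm0_comm.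
  - exact: OWW.
  - by rewrite acommC OZW DE eq_sym (negbTE hkk) mul0r scale0r.
  - by rewrite OZW DE (negbTE hkk) mul0r scale0r.
  - exact: OZZ.
have fcomm : forall k k' (x : A k) (y : A k'), k != k' -> f k x * f k' y = f k' y * f k x.
  move=> k k' x y hkk.
  have step1 : forall b', f k x * f k' (gen k' b') = f k' (gen k' b') * f k x.
    move=> b'; apply: (centr_lemma (HA k) (hf k)) => b.
    by rewrite !Hfg gencomm.
  apply/esym; apply: (centr_lemma (HA k') (hf k')) => b'.
  by rewrite step1.
have [[Psi [hPsi HPsi]] _] := HTu Om f hf fcomm.
exists Phi; split => //.
exists Psi.
- have [_ uO] := Hom.2 Om g Hom.1.
  move=> x; apply: (uO (Psi \o Phi) id (hom_comp hPhi hPsi) (@hom_id Om)) => // i.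
  rewrite /= HPhi; case: i => [i|j] /=.
  + rewrite (hom_sumZ _ _ hPsi).
    under eq_bigr => k _ do rewrite HPsi Hfg /=.
    rewrite change_basis; apply: sum_delta => i'.
    by have [_ ->] := mxinv_entry i i' HL.
  + rewrite (hom_sumZ _ _ hPsi).
    under eq_bigr => k _ do rewrite HPsi Hfg /=.
    rewrite change_basis; apply: sum_delta => j'.
    under eq_bigr do rewrite mulrC.
    by have [-> _] := mxinv_entry j' j HU; rewrite eq_sym.
- have [_ uT] := HTu T iota Hi Hc.
  move=> t; apply: (uT (Phi \o Psi) id (hom_comp hPsi hPhi) (@hom_id T)) => // k x.
  rewrite /= HPsi.
  have [_ uk] := (HA k).2 T (fun b => iota k (gen k b)) (cliff_hom (Hi k) (HA k).1).
  apply: (uk (Phi \o f k) (iota k) (hom_comp (hf k) hPhi) (Hi k)) => // b.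
  rewrite /= Hfg; case: b => /=.
  + rewrite (hom_sumZ _ _ hPhi).
    under eq_bigr => j _ do rewrite HPhi /=.
    rewrite change_basis; apply: sum_delta => k'.
    under eq_bigr do rewrite mulrC.
    by have [_ ->] := mxinv_entry k' k HU; rewrite eq_sym.
  + rewrite (hom_sumZ _ _ hPhi).
    under eq_bigr => i _ do rewrite HPhi /=.
    rewrite change_basis; apply: sum_delta => k'.
    by have [-> _] := mxinv_entry k k' HL.
Qed.

Section Rank.
Variables (n : nat) (nu : {perm 'I_n}).
Local Notation l := #|porbits nu|.
Definition eX (X : 'I_l) : {set 'I_n} := enum_val X.

Lemma eX_porbit X : exists x, eX X = porbit nu x.
Proof. by rewrite /eX; have /imsetP [x _ ->] := enum_valP X; exists x. Qed.

Lemma porbit_nu y : porbit nu (nu y) = porbit nu y.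
Proof. by have := porbit_perm nu 1 y; rewrite expg1. Qed.

Lemma eX_stable X y : (nu y \in eX X) = (y \in eX X).
Proof.
have [x ->] := eX_porbit X.
by rewrite -!eq_porbit_mem porbit_nu.
Qed.

Lemma eX_in X y : y \in eX X -> eX X = porbit nu y.
Proof. by have [x ->] := eX_porbit X; rewrite -eq_porbit_mem => /eqP ->. Qed.

Lemma eX_uniq X Y y : y \in eX X -> y \in eX Y -> X = Y.
Proof. by move=> /eX_in h1 /eX_in h2; apply: enum_val_inj; rewrite -/(eX X) -/(eX Y) h1 h2. Qed.

Lemma pmxE k j : (perm_mx nu : 'M[F2]_n) k j = (nu k == j)%:R.
Proof. by rewrite /perm_mx !mxE. Qed.

Lemma sum_perm (a : 'I_n -> F2) j : \sum_k a k * (nu k == j)%:R = a ((nu^-1)%g j).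
Proof.
rewrite (bigD1 ((nu^-1)%g j)) //= permKV eqxx mulr1 big1 ?addr0 // => k hk.
case: eqP => [e|]; last by rewrite mulr0.
by move: hk; rewrite -e permK eqxx.
Qed.

Definition Omx : 'M[F2]_(l, n) := \matrix_(X, j) (j \in eX X)%:R.
Definition Mmx : 'M[F2]_(n, l) := \matrix_(j, X) (Some j == [pick x in eX X])%:R.

Lemma eX_pick X : exists2 x, [pick x in eX X] = Some x & x \in eX X.
Proof.
case: pickP => [x hx|h]; first by exists x.
have [x e] := eX_porbit X; have := h x; by rewrite e porbit_id.
Qed.

Lemma OM1 : Omx *m Mmx = 1%:M.
Proof.
apply/matrixP => X Y; rewrite !mxE.
under eq_bigr do rewrite !mxE.
have [y -> hy] := eX_pick Y.
rewrite (bigD1 y) //= eqxx mulr1 big1 ?addr0.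
  case: (eqVneq X Y) => [->|hXY]; first by rewrite hy.
  case hyX: (y \in eX X) => //; by rewrite (eX_uniq hyX hy) eqxx in hXY.
by move=> k hk; case: eqP => [[e]|]; [by move: hk; rewrite e eqxx | by rewrite mulr0].
Qed.

Lemma rankO : \rank Omx = l.
Proof.
apply/eqP; rewrite eqn_leq rank_leq_row /=.
by rewrite -{1}(mxrank1 F2 l) -OM1 mxrankM_maxl.
Qed.

Lemma O_ker : (Omx <= kermx (perm_mx nu - 1%:M))%MS.
Proof.
apply/sub_kermxP; rewrite mulmxBr mulmx1; apply/eqP; rewrite subr_eq0; apply/eqP.
apply/matrixP => X j; rewrite mxE.
under eq_bigr do rewrite pmxE.
by rewrite sum_perm !mxE -eX_stable permKV.
Qed.

Lemma ker_O (v : 'rV[F2]_n) : v *m (perm_mx nu - 1%:M) = 0 -> (v <= Omx)%MS.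
Proof.
rewrite mulmxBr mulmx1 => /eqP; rewrite subr_eq0 => /eqP hv.
have hv1 : forall j, v 0 (nu j) = v 0 j.
  move=> j; have := congr1 (fun M : 'rV_n => M 0 (nu j)) hv; rewrite mxE /=.
  by under eq_bigr do rewrite pmxE; rewrite sum_perm permK => <-.
have hvi : forall i j, v 0 ((nu ^+ i)%g j) = v 0 j.
  elim=> [|i IH] j; first by rewrite expg0 perm1.
  by rewrite expgSr permM hv1 IH.
have hc : forall x y, y \in porbit nu x -> v 0 y = v 0 x.
  by move=> x y /porbitP [i ->]; rewrite hvi.
pose w : 'rV[F2]_l := \row_X oapp (v 0) 0 [pick x in eX X].
have -> : v = w *m Omx; last exact: submxMl.
apply/matrixP => i j; rewrite (ord1 i) !mxE.
have Hj : porbit nu j \in porbits nu by apply: imset_f.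
pose X0 := enum_rank_in Hj (porbit nu j).
have eX0 : eX X0 = porbit nu j by rewrite /eX enum_rankK_in.
have jX0 : j \in eX X0 by rewrite eX0 porbit_id.
rewrite (bigD1 X0) //= big1 ?addr0.
  rewrite !mxE jX0 mulr1; have [y -> hy] := eX_pick X0 => /=.
  by rewrite (hc j y) // -eX0.
move=> X hX; rewrite !mxE; case hjX: (j \in eX X); last by rewrite mulr0.
by rewrite (eX_uniq hjX jX0) eqxx in hX.
Qed.

Lemma rank_perm1 : \rank (perm_mx nu - 1%:M : 'M[F2]_n) = (n - l)%N.
Proof.
have hk : \rank (kermx (perm_mx nu - 1%:M : 'M[F2]_n)) = l.
  have h1 := mxrankS O_ker.
  have h2 : (kermx (perm_mx nu - 1%:M : 'M[F2]_n) <= Omx)%MS.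
    apply/row_subP => i; apply: ker_O.
    by rewrite -row_mul mulmx_ker row0.
  have h3 := mxrankS h2.
  by rewrite rankO in h1 h3; apply/eqP; rewrite eqn_leq h1 h3.
rewrite mxrank_ker in hk.
have := rank_leq_row (perm_mx nu - 1%:M : 'M[F2]_n).
move: (\rank _) hk => r; lia.
Qed.
End Rank.

Lemma presents_ext (I : Type) (rel1 rel2 : forall B : algType F2, (I -> B) -> Prop)
  (A : algType F2) (g : I -> A) :
  (forall B h, rel1 B h <-> rel2 B h) -> presents rel1 g -> presents rel2 g.
Proof.
move=> E [h1 h2]; split; first by apply/E.
by move=> B h /E; apply: h2.
Qed.

Theorem proposition3p3
  (n : nat) (nu : {perm 'I_n})
  (Om : algType F2) (g : 'I_n + 'I_n -> Om)
  (Hom : @presents ('I_n + 'I_n) (@Omega_rel n nu) Om g)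
  (O1 : algType F2) (g1 : bool -> O1) (HO1 : @presents bool (Cliff2_rel 1) O1 g1)
  (Th : algType F2) (g0 : bool -> Th) (HTh : @presents bool (Cliff2_rel 0) Th g0)
  (T : algType F2)
  (iota : forall k : 'I_n,
     (if (k < n - ncycles nu)%N then O1 else Th) -> T)
  (HT : @is_tensor_family n (fun k : 'I_n => if (k < n - ncycles nu)%N then O1 else Th) T iota) :
  exists f : Om -> T, alg_iso f.
Proof.
pose M : 'M[F2]_n := perm_mx nu - 1%:M.
pose c (k : 'I_n) : F2 := if (k < n - ncycles nu)%N then 1 else 0.
pose gen (k : 'I_n) : bool -> (if (k < n - ncycles nu)%N then O1 else Th) :=
  if (k < n - ncycles nu)%N as b return bool -> (if b then O1 else Th) then g1 else g0.
have HA : forall k, presents (Cliff2_rel (c k)) (gen k).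
  by move=> k; rewrite /gen /c; case: (k < n - ncycles nu)%N.
have HM : M = col_ebase M *m (\matrix_(a, b) ((a == b)%:R * c a)) *m row_ebase M.
  rewrite -{1}(mulmx_ebase M); congr (_ *m _ *m _).
  rewrite rank_perm1; apply/matrixP => a b; rewrite !mxE /c.
  case: (eqVneq a b) => [<-|hab]; rewrite ?eqxx /=.
    by case: (a < _)%N; rewrite ?mulr1 ?mulr0.
  have -> : (a == b :> nat) = false by apply/negbTE.
  by rewrite mul0r.
have HOm : presents (OmM_rel M) g.
  apply: presents_ext Hom => B h.
  have E : forall i j, ((nu i == j)%:R - (i == j)%:R : B) = (M i j)%:A.
    by move=> i j; rewrite !mxE scalerBl !scaler_nat.
  split; case=> h1 h2 h3 h4 h5; split => // i j; by rewrite h5 E.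
exact: (@main_abstract n M _ _ c (col_ebase_unit M) (row_ebase_unit M) HM
          Om g HOm (fun k => if (k < n - ncycles nu)%N then O1 else Th) gen HA T iota HT).
Qed.
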